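(* Let $q=p^m$ with $p$ prime, let $\gamma$ be such that $\mathbb{F}_q=\mathbb{F}_p[\gamma]$, and let $t=\lfloor\frac{m-1}{2}\rfloor$. Let $n,k$ be integers with $4\le k\le\frac{n-1}{2}$ and $n\le p^t$, and let $h=k+1$. Let $\alpha_1,\dots,\alpha_n$ be pairwise distinct elements of $\mathbb{F}_q$ of the form $\alpha_i=\gamma^t+\sum_{j=0}^{t-1}a_{ij}\gamma^j$ with $a_{ij}\in\mathbb{F}_p$. Let $C_{h,k}$ be the linear code generated by the $k\times n$ matrix whose rows are $(\alpha_1^{e},\dots,\alpha_n^{e})$ for $e=0,1,\dots,k-2$ and $e=h$. If $p\nmid\frac{k(k+1)}{2}$, then $C_{h,k}$ is a non-GRS MDS code over $\mathbb{F}_q$.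
   Context: Convention: $0^0=1$. A linear code is MDS if its parameters $[n,k,d]$ satisfy $d=n-k+1$. For pairwise distinct $a_1,\dots,a_n\in\mathbb{F}_q$ and $w\in(\mathbb{F}_q^* )^n$, $GRS(n,k,\{a_i\},w)=\{(w_1f(a_1),\dots,w_nf(a_n)) : f\in\mathbb{F}_q[x],\ \deg f\le k-1\}$. Two codes are (monomially) equivalent if one is obtained from the other by permuting coordinates and scaling coordinates by nonzero scalars. A non-GRS MDS code is an MDS code not equivalent to any GRS code. *)

(* Defs.v *)
From HB Require Import structures.
From mathcomp Require Import all_boot all_order all_algebra.
From mathcomp Require Import fingroup perm.
Set Implicit Arguments. Unset Strict Implicit. Unset Printing Implicit Defensive.
Import Order.TTheory GRing.Theory.
Local Open Scope ring_scope.

Section Codes.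
Variables (F : fieldType) (n : nat).

Definition wt (v : 'rV[F]_n) : nat := #|[set i : 'I_n | v 0 i != 0]|.

Definition in_code (r : nat) (G : 'M[F]_(r, n)) (v : 'rV[F]_n) : bool :=
  (v <= G)%MS.

Definition min_dist (r : nat) (G : 'M[F]_(r, n)) (d : nat) : Prop :=
  (exists2 v, in_code G v /\ v != 0 & wt v = d) /\
  (forall v, in_code G v -> v != 0 -> (d <= wt v)%N).

Definition is_MDS (r : nat) (G : 'M[F]_(r, n)) : Prop :=
  min_dist G (n - \rank G + 1)%N.

Definition in_GRS (k : nat) (a w : 'I_n -> F) (v : 'rV[F]_n) : Prop :=
  exists2 f : {poly F}, (size f <= k)%N & v = \row_j (w j * f.[a j]).

Definition equiv_GRS (r : nat) (G : 'M[F]_(r, n)) : Prop :=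
  exists (k : nat) (a w : 'I_n -> F) (s : 'S_n) (lam : 'I_n -> F),
    injective a /\ (forall i, w i != 0) /\ (forall i, lam i != 0) /\
    (forall v : 'rV[F]_n,
        in_code G v <-> in_GRS k a w (\row_j (lam j * v 0 (s j)))).

Definition non_GRS_MDS (r : nat) (G : 'M[F]_(r, n)) : Prop :=
  is_MDS G /\ ~ equiv_GRS G.

End Codes.

Definition Chk_gen (F : fieldType) (n k h : nat) (alpha : 'I_n -> F)
  : 'M[F]_(k, n) :=
  \matrix_(i < k, j < n) alpha j ^+ (if (i < k.-1)%N then (i : nat) else h).

(* F = F_p[gamma]: every element is a polynomial in gamma with coefficients
   in the prime field (elements c%:R, c : nat) *)
Definition generates_over_prime (F : fieldType) (gamma : F) : Prop :=
  forall x : F, exists s : seq nat,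
    x = \sum_(j < size s) (nth 0%N s j)%:R * gamma ^+ j.

(* Main.v *)
Require Import Defs.
From HB Require Import structures.
From mathcomp Require Import all_boot all_order all_algebra all_field.
From mathcomp Require Import fingroup perm ring zify.
Import GRing.Theory.
Local Open Scope ring_scope.


Lemma Fp_morph (F : fieldType) (p : nat) : prime p -> p \in [pchar F] ->
  exists phi : {rmorphism 'F_p -> F}, forall x : 'F_p, phi x = (x : nat)%:R.
Proof.
move=> pp chF.
pose f (x : 'F_p) : F := (x : nat)%:R.
have fA : nmod_morphism f.
  split; first by rewrite /f /=; case: (Zp_trunc _) => *.
  have h (a b : nat) : ((a + b) %% (Zp_trunc (pdiv p)).+2)%:R = a%:R + b%:R :> F.
    by rewrite Fp_cast // (GRing.natr_mod_pchar chF) natrD.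
  by move=> x y; rewrite /f /= h.
have fM : monoid_morphism f.
  split; first by rewrite /f /= Fp_cast // modn_small ?prime_gt1.
  have h (a b : nat) : ((a * b) %% (Zp_trunc (pdiv p)).+2)%:R = a%:R * b%:R :> F.
    by rewrite Fp_cast // (GRing.natr_mod_pchar chF) natrM.
  by move=> x y; rewrite /f /= h.
pose fa := GRing.isNmodMorphism.Build _ _ f fA.
pose fm := GRing.isMonoidMorphism.Build _ _ f fM.
pose phi : {rmorphism _ -> _} := HB.pack f fa fm.
by exists phi.
Qed.


Lemma indep (F : finFieldType) (p m : nat) (gamma : F) (phi : {rmorphism 'F_p -> F}) :
  prime p -> #|F| = (p ^ m)%N ->
  (forall x : F, exists q : {poly 'F_p}, x = (map_poly phi q).[gamma]) ->
  forall g : {poly 'F_p}, g != 0 -> (size g <= m)%N -> (map_poly phi g).[gamma] != 0.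
Proof.
move=> pp cardF gen g g_nz szg; apply/negP => /eqP g0.
have all_r (x : F) : exists r : {poly 'F_p}, (size r < size g)%N /\ x = (map_poly phi r).[gamma].
  have [q ->] := gen x; exists (q %% g); split; first by rewrite ltn_modp.
  by rewrite {1}(divp_eq q g) rmorphD rmorphM /= hornerD hornerM g0 mulr0 add0r.
pose d := (size g).-1.
pose M (f : {ffun 'I_d -> 'F_p}) : F := \sum_(i < d) phi (f i) * gamma ^+ i.
have sub : [set: F] \subset M @: [set: {ffun 'I_d -> 'F_p}].
  apply/subsetP => x _; have [r [szr ->]] := all_r x.
  apply/imsetP; exists [ffun i : 'I_d => r`_i] => //.
  rewrite /M (horner_coef_wide _ (n := d)).
    by apply: eq_bigr => i _; rewrite ffunE coef_map.
  rewrite size_map_poly /d -ltnS prednK //.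
  by rewrite size_poly_gt0.
have := leq_trans (subset_leq_card sub) (leq_imset_card _ _).
rewrite cardsT cardF cardsT card_ffun card_Fp // card_ord leq_exp2l ?prime_gt1 //.
rewrite /d; move: szg; rewrite -size_poly_gt0 in g_nz; case: (size g) g_nz => //= s _.
by move=> le1 le2; have := leq_ltn_trans le2 le1; rewrite ltnn.
Qed.


Fixpoint E2 {R : comPzRingType} (s : seq R) : R :=
  if s is b :: s' then b * \sum_(x <- s') x + E2 s' else 0.

Lemma sqS1 (R : comPzRingType) (s : seq R) :
  (\sum_(b <- s) b) ^+ 2 = \sum_(b <- s) b ^+ 2 + 2%:R * E2 s.
Proof.
elim: s => [|b s IH] /=; first by rewrite !big_nil expr0n /= mulr0 addr0.
rewrite !big_cons sqrrD IH; ring.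
Qed.

Lemma vieta (F : fieldType) (s : seq F) :
  ('X^2 * \prod_(b <- s) ('X - b%:P))`_(size s).+1 = - \sum_(b <- s) b /\
  ('X^2 * \prod_(b <- s) ('X - b%:P))`_(size s) = E2 s.
Proof.
elim: s => [|b s [IH1 IH2]] /=.
  by rewrite !big_nil mulr1 !coefXn /= oppr0.
have top : ('X^2 * \prod_(b <- s) ('X - b%:P))`_(size s).+2 = 1.
  rewrite coefXnM /= subn2 /=.
  have := lead_coef_prod_XsubC s xpredT id; rewrite /lead_coef (size_prod_XsubC s id).
  by [].
rewrite big_cons mulrCA mulrBl !coefB !coefXM !coefCM /= IH1 IH2 top big_cons; split; ring.
Qed.

Definition eidx (k : nat) (i : 'I_k) : nat := if (i < k.-1)%N then (i : nat) else k.+1.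

Arguments eidx {k} i.

Lemma eidx_inj k : injective (@eidx k).
Proof.
move=> i j; rewrite /eidx => e; apply: val_inj => /=.
have := ltn_ord i; have := ltn_ord j.
move: e; case: ltnP => hi; case: ltnP => hj => // e li lj; try lia.
Qed.

Lemma coef_fk (F : fieldType) k (c : 'I_k -> F) j :
  (\sum_(i < k) c i *: 'X^(eidx i))`_j = \sum_(i < k | eidx i == j) c i.
Proof.
rewrite coef_sum [RHS]big_mkcond; apply: eq_bigr => i _.
by rewrite coefZ coefXn eq_sym; case: eqP => _; rewrite ?mulr1 ?mulr0.
Qed.

Lemma KL (F : fieldType) (k : nat) (c : 'I_k -> F) (s : seq F) :
  (1 <= k)%N -> uniq s -> size s = k ->
  all (root (\sum_(i < k) c i *: 'X^(eidx i))) s ->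
  \sum_(b <- s) b ^+ 2 + E2 s != 0 -> forall i, c i = 0.
Proof.
move=> k1 us ssz rts h2.
set f := \sum_(i < k) _ in rts *.
have cf j : f`_j = \sum_(i < k | eidx i == j) c i by rewrite coef_fk.
suff f0 : f = 0.
  move=> i; have := cf (eidx i); rewrite f0 coef0 (big_pred1 i) //.
  by move=> l /=; apply/eqP/eqP => [/eidx_inj|->].
apply/eqP; apply: contraLR h2 => fn0; apply/negPn.
set P := \prod_(b <- s) ('X - b%:P).
have [Q fQP] : exists Q, f = Q * P.
  by apply: uniq_roots_prod_XsubC; rewrite // uniq_rootsE.
have szP : size P = k.+1 by rewrite size_prod_XsubC ssz.
have Pn0 : P != 0 by rewrite -size_poly_eq0 szP.
have Qn0 : Q != 0 by apply: contraNneq fn0 => Q0; rewrite fQP Q0 mul0r.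
have szf : (size f <= k.+2)%N.
  apply/leq_sizeP => j hj; rewrite cf big1 // => i /eqP ei.
  move: hj; rewrite -ei /eidx; case: ifP => hh; rewrite ?ltnn /=; move: (ltn_ord i) hh; lia.
have szQ : (size Q <= 2)%N.
  by move: szf; rewrite fQP size_mul // szP addnS /= -addn2 addnC leq_add2l.
have eQ : Q = (Q`_0)%:P + (Q`_1)%:P * 'X.
  apply/polyP => j; rewrite coefD coefC coefMX coefC.
  case: j => [|[|j]] /=; rewrite ?addr0 ?add0r //.
  by rewrite nth_default //; apply: leq_trans szQ _.
set Y := 'X^2 * P.
have [V1 V2] := @vieta F s; rewrite -/P -/Y ssz in V1 V2.
have top : Y`_k.+2 = 1.
  rewrite coefXnM /= subn2 /=.
  have := lead_coef_prod_XsubC s xpredT id; rewrite /lead_coef (size_prod_XsubC s id) ssz.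
  by [].
have XfQY : 'X^2 * f = Q`_0 *: Y + Q`_1 *: ('X * Y).
  by rewrite fQP mulrCA -/Y {1}eQ mulrDl -!mul_polyC mulrA.
have cz j : (j == k) || (j == k.-1) -> f`_j = 0.
  move=> hj; rewrite cf big1 // => i /eqP ei; move: hj; rewrite -ei /eidx.
  case: ifP => hi; rewrite ?eqxx; lia.
have eq1 : Q`_0 - Q`_1 * \sum_(b <- s) b = 0.
  have := congr1 (fun p : {poly F} => p`_k.+2) XfQY; rewrite /= coefXnM /= subn2 /= cz ?eqxx //.
  rewrite coefD !coefZ coefXM /= top V1 mulr1 => h; apply: etrans (esym h); ring.
have eq2 : - Q`_0 * \sum_(b <- s) b + Q`_1 * E2 s = 0.
  have := congr1 (fun p : {poly F} => p`_k.+1) XfQY; rewrite /= coefXnM /= subn2 /= cz; last by rewrite eqxx orbT.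
  rewrite coefD !coefZ coefXM /= V1 V2  if_same => h; apply: etrans (esym h); ring.
have Q1n0 : Q`_1 != 0.
  apply: contraNneq Qn0 => Q10; rewrite eQ Q10 mul0r addr0.
  by move: eq1; rewrite Q10 mul0r subr0 => ->.
have : Q`_1 * (E2 s - (\sum_(b <- s) b) ^+ 2) = 0.
  have Q0e : Q`_0 = Q`_1 * \sum_(b <- s) b by apply/eqP; rewrite -subr_eq0 eq1.
  by rewrite -[RHS]eq2 Q0e; ring.
move/eqP; rewrite mulf_eq0 (negPf Q1n0) /= subr_eq0 sqS1 => /eqP e.
apply/eqP; apply: (etrans _ (subrr (E2 s))); rewrite [X in _ = X - _]e; ring.
Qed.


Lemma E2_morph (R S : comNzRingType) (f : {rmorphism R -> S}) (s : seq R) :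
  f (E2 s) = E2 (map f s).
Proof.
elim: s => [|b s IH] /=; first by rewrite rmorph0.
by rewrite rmorphD rmorphM rmorph_sum IH big_map.
Qed.

Definition Pr (K : fieldType) (d : nat) (q : {poly K}) (c : K) :=
  (size q <= d.+1)%N /\ q`_d = c.
Arguments Pr {K} d q c.

Lemma PrD (K : fieldType) d (q q' : {poly K}) c c' : Pr d q c -> Pr d q' c' -> Pr d (q + q') (c + c').
Proof.
move=> [s1 e1] [s2 e2]; split; last by rewrite coefD e1 e2.
by apply: leq_trans (size_polyD _ _) _; rewrite geq_max s1 s2.
Qed.

Lemma PrSum (K : fieldType) (d : nat) (T : eqType) (u : seq T) (G : T -> {poly K}) :
  (forall x, x \in u -> Pr d (G x) 1) -> Pr d (\sum_(x <- u) G x) (size u)%:R.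
Proof.
elim: u => [|b u IH] H /=; first by rewrite big_nil; split; rewrite ?size_poly0 ?coef0.
rewrite big_cons /= -addn1 natrD addrC; apply: PrD; last by apply: H; rewrite mem_head.
by apply: IH => x xu; apply: H; rewrite in_cons xu orbT.
Qed.

Lemma PrM (K : fieldType) t (x y : {poly K}) :
  x \is monic -> size x = t.+1 -> y \is monic -> size y = t.+1 -> Pr (t.*2) (x * y) 1.
Proof.
move=> mx sx my sy.
have sxy : size (x * y) = (t.*2).+1 by rewrite size_monicM ?monic_neq0 // sx sy addSn /= addnS -addnn.
split; first by rewrite sxy.
have := monicMl y mx; rewrite my => /monicP; rewrite /lead_coef sxy /=.
done.
Qed.

Lemma PrE2 (K : fieldType) (t : nat) (u : seq {poly K}) :
  all (fun x => (x \is monic) && (size x == t.+1)) u ->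
  Pr (t.*2) (\sum_(x <- u) x ^+ 2 + E2 u) ('C((size u).+1, 2))%:R.
Proof.
move=> gu.
have gm x : x \in u -> (x \is monic) /\ size x = t.+1.
  by move=> xu; have /andP[-> /eqP ->] := allP gu x xu.
have hE : Pr (t.*2) (E2 u) ('C(size u, 2))%:R.
  elim: u gu gm => [|b u IH] gu gm /=; first by split; rewrite ?size_poly0 ?coef0.
  have [mb sb] := gm b (mem_head _ _).
  have gu' : all (fun x => (x \is monic) && (size x == t.+1)) u by case/andP: gu.
  have gm' x : x \in u -> (x \is monic) /\ size x = t.+1.
    by move=> xu; apply: gm; rewrite in_cons xu orbT.
  rewrite binS bin1 natrD addrC; apply: PrD; first exact: IH.
  rewrite mulr_sumr; apply: PrSum => x xu; have [mx sx] := gm' x xu; exact: PrM.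
rewrite binS bin1 natrD addrC; apply: PrD => //.
apply: PrSum => x xu; have [mx sx] := gm x xu; rewrite expr2; exact: PrM.
Qed.

Lemma h2_nz (F : finFieldType) (p m : nat) (gamma : F) (t : nat)
  (phi : {rmorphism 'F_p -> F}) (A : seq {poly 'F_p}) :
  prime p -> #|F| = (p ^ m)%N ->
  (forall x : F, exists q : {poly 'F_p}, x = (map_poly phi q).[gamma]) ->
  (t.*2 < m)%N ->
  all (fun x => (x \is monic) && (size x == t.+1)) A ->
  ~~ (p %| 'C((size A).+1, 2))%N ->
  let s := map (fun q => (map_poly phi q).[gamma]) A in
  \sum_(b <- s) b ^+ 2 + E2 s != 0.
Proof.
move=> pp cF gen tm gA ndv /=.
have [szH cH] := @PrE2 _ t A gA.
set H := \sum_(x <- A) x ^+ 2 + E2 A in szH cH.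
have Hn0 : H != 0.
  apply: contraNneq ndv => H0; move: cH; rewrite H0 coef0 => /esym/eqP.
  by rewrite -(dvdn_pcharf (pchar_Fp pp)).
have := @indep F p m gamma phi pp cF gen H Hn0 (leq_trans szH tm).
have cfu : commr_rmorph phi gamma by move=> x; apply: mulrC.
suff -> : (map_poly phi H).[gamma] = \sum_(b <- [seq (map_poly phi q).[gamma] | q <- A]) b ^+ 2
   + E2 [seq (map_poly phi q).[gamma] | q <- A] by [].
have -> : (map_poly phi H).[gamma] = horner_morph cfu H by [].
rewrite rmorphD rmorph_sum E2_morph big_map.
by congr (_ + _); apply: eq_bigr => i _; rewrite rmorphXn.
Qed.

Lemma ker_nz (F : fieldType) m r (M : 'M[F]_(m, r)) :
  ~~ row_free M -> exists2 c : 'rV_m, c != 0 & c *m M = 0.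
Proof.
rewrite -kermx_eq0 => kn0.
have [i ri] : exists i, row i (kermx M) != 0.
  apply/existsP; apply: contraNT kn0; rewrite negb_exists => /forallP h.
  apply/eqP/row_matrixP => i; rewrite row0; exact/eqP/negPn/h.
exists (row i (kermx M)) => //; apply/sub_kermxP; exact: row_sub.
Qed.

Lemma dep (F : fieldType) m r (M : 'M[F]_(m, r)) :
  (r < m)%N -> exists2 c : 'rV_m, c != 0 & c *m M = 0.
Proof.
move=> rm; apply: ker_nz; rewrite /row_free; apply: contraTN rm => /eqP <-.
by rewrite -leqNgt rank_leq_col.
Qed.

Lemma coef_sumXe (F : fieldType) d (c : 'I_d -> F) (e : 'I_d -> nat) l :
  (\sum_(i < d) c i *: 'X^(e i))`_l = \sum_(i < d | e i == l) c i.
Proof.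
rewrite coef_sum [RHS]big_mkcond; apply: eq_bigr => i _.
by rewrite coefZ coefXn eq_sym; case: eqP => _; rewrite ?mulr1 ?mulr0.
Qed.

Lemma PZ (F : fieldType) n d (c : 'rV[F]_d) (x : 'I_n -> F) :
  injective x -> (d <= n)%N -> (forall j, \sum_(i < d) c 0 i * x j ^+ i = 0) -> c = 0.
Proof.
move=> xi dn h.
set P := \sum_(i < d) c 0 i *: 'X^i.
have cP l : P`_l = \sum_(i < d | (i : nat) == l) c 0 i by rewrite coef_sumXe.
suff P0 : P = 0.
  apply/matrixP => i0 i; rewrite !mxE (ord1 i0).
  have := cP i; rewrite P0 coef0 (big_pred1 i) => [->//|l /=].
  by apply/eqP/eqP => [/val_inj|->].
apply/eqP; apply: contraT => Pn0.
have szP : (size P <= d)%N.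
  apply/leq_sizeP => l dl; rewrite cP big1 // => i /eqP il.
  by move: (ltn_ord i); rewrite il ltnNge dl.
have := max_poly_roots Pn0 (rs := map x (enum 'I_n)).
rewrite map_inj_uniq ?enum_uniq // size_map size_enum_ord.
have -> : all (root P) [seq x i | i <- enum 'I_n].
  apply/allP => y /mapP [j _ ->]; apply/rootP.
  rewrite horner_sum -[RHS](h j); apply: eq_bigr => i _; by rewrite hornerZ hornerXn.
move=> /(_ isT isT) lt; have := leq_trans lt (leq_trans szP dn); by rewrite ltnn.
Qed.

Lemma wt0 (F : fieldType) n : wt (0 : 'rV[F]_n) = 0%N.
Proof. by rewrite /wt eq_card0 // => j; rewrite !inE mxE eqxx. Qed.

Lemma MDS_part (F : fieldType) n k (alpha : 'I_n -> F) :
  injective alpha -> (1 <= k)%N -> (k <= n)%N ->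
  (forall l : seq 'I_n, uniq l -> size l = k ->
     \sum_(b <- map alpha l) b ^+ 2 + E2 (map alpha l) != 0) ->
  \rank (Chk_gen k k.+1 alpha) = k /\ is_MDS (Chk_gen k k.+1 alpha).
Proof.
move=> ai k1 kn HH.
set G := Chk_gen k k.+1 alpha.
have ev (c : 'rV_k) j : (c *m G) 0 j = (\sum_(i < k) c 0 i *: 'X^(eidx i)).[alpha j].
  rewrite !mxE horner_sum; apply: eq_bigr => i _.
  by rewrite hornerZ hornerXn mxE.
have wtb (c : 'rV_k) : c != 0 -> (n - k.-1 <= wt (c *m G))%N.
  move=> cn0; set Z := [set j | (c *m G) 0 j == 0].
  have cZ : (#|Z| < k)%N.
    rewrite ltnNge; apply/negP => kZ.
    set l := take k (enum Z).
    have ul : uniq l by rewrite take_uniq // enum_uniq.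
    have sl : size l = k by rewrite size_takel // -cardE.
    have := @KL F k (fun i => c 0 i) (map alpha l) k1.
    rewrite map_inj_uniq // ul size_map sl => /(_ isT erefl).
    have -> : all (root (\sum_(i < k) c 0 i *: 'X^(eidx i))) [seq alpha i | i <- l].
      apply/allP => y /mapP [j jl ->]; apply/rootP; rewrite -ev.
      by move: (mem_take jl); rewrite mem_enum inE => /eqP.
    move=> /(_ isT (HH l ul sl)) c0; case/negP: cn0; apply/eqP/matrixP => i0 i.
    by rewrite (ord1 i0) c0 mxE.
  have -> : wt (c *m G) = #|~: Z|.
    by rewrite /wt; apply: eq_card => j; rewrite !inE.
  have := cardsC Z; rewrite card_ord => e; lia.
have rf : row_free G.
  apply/negP => /negP nf; have [c cn0 c0] := @ker_nz F _ _ G nf; have := wtb c cn0.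
  rewrite c0 wt0; lia.
have rk : \rank G = k by apply/eqP.
split => //; rewrite /is_MDS rk.
have -> : (n - k + 1 = n - k.-1)%N by lia.
split; last first.
  move=> v vc vn0; have e := mulmxKpV vc.
  rewrite -e; apply: wtb; apply: contraNneq vn0 => c0.
  by rewrite -e c0 mul0mx.
have wk : (k.-1 <= n)%N by lia.
pose M := \matrix_(i < k, l < k.-1) G i (widen_ord wk l).
have [c cn0 cM] : exists2 c : 'rV_k, c != 0 & c *m M = 0 by apply: dep; lia.
exists (c *m G); last first.
  apply/eqP; rewrite eqn_leq wtb // andbT.
  set Z := [set j | (c *m G) 0 j == 0].
  have sub : [set widen_ord wk l | l : 'I_k.-1] \subset Z.
    apply/subsetP => j /imsetP [l _ ->]; rewrite inE.
    have := congr1 (fun A : 'rV_k.-1 => A 0 l) cM; rewrite !mxE => h.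
    apply/eqP; rewrite -[RHS]h; apply: eq_bigr => i _. by rewrite /M [in RHS]mxE.
  have := subset_leq_card sub; rewrite card_imset ?card_ord; last first.
    by move=> x y /(congr1 val) /= /val_inj.
  have -> : wt (c *m G) = #|~: Z|.
    by rewrite /wt; apply: eq_card => j; rewrite !inE.
  have := cardsC Z; rewrite card_ord => e; lia.
split; first exact: submxMl.
apply/negP => /eqP v0; have := wtb c cn0; rewrite v0 wt0; lia.
Qed.
Lemma nonGRS (F : fieldType) n k (alpha : 'I_n -> F) :
  injective alpha -> (4 <= k)%N -> (k.*2 <= n)%N -> ~ equiv_GRS (Chk_gen k k.+1 alpha).
Proof.
move=> ai k4 kn [k' [a [w [s [lam [ainj [wn0 [lamn0 EQ]]]]]]]].
set G := Chk_gen k k.+1 alpha.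
case: (leqP k' k) => hk'.
  have ex_f (i : 'I_k) : exists2 f : {poly F}, (size f <= k')%N &
      forall j, lam j * alpha (s j) ^+ eidx i = w j * f.[a j].
    have [f sf e] := (EQ (row i G)).1 (row_sub i G).
    exists f => // j; have := congr1 (fun v : 'rV_n => v 0 j) e.
    by rewrite !mxE.
  have [fs szf eqf] := fin_all_exists2 ex_f.
  have ex_p (e : 'I_(k.*2)) : exists pr : 'I_k * 'I_k, (eidx pr.1 + eidx pr.2)%N = e.
    have le := ltn_ord e.
    case: (leqP e (k.-2).*2) => he.
      have h1 : (minn e k.-2 < k)%N by lia.
      have h2 : (e - minn e k.-2 < k)%N by lia.
      exists (Ordinal h1, Ordinal h2); rewrite /eidx /=.
      have -> : (minn e k.-2 < k.-1)%N by lia.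
      have -> : (e - minn e k.-2 < k.-1)%N by lia.
      lia.
    have h1 : (e - k.+1 < k)%N by lia.
    have h2 : (k.-1 < k)%N by lia.
    exists (Ordinal h1, Ordinal h2); rewrite /eidx /=.
    have -> : (e - k.+1 < k.-1)%N by lia.
    rewrite ltnn; lia.
  have [pr epr] := fin_all_exists ex_p.
  pose hs (e : 'I_(k.*2)) := fs (pr e).1 * fs (pr e).2.
  have szh e : (size (hs e) <= (k.*2).-1)%N.
    apply: leq_trans (size_mul_leq _ _) _.
    have := szf (pr e).1; have := szf (pr e).2; lia.
  have eqh (e : 'I_(k.*2)) j : lam j ^+ 2 * alpha (s j) ^+ e = w j ^+ 2 * (hs e).[a j].
    rewrite -(epr e) exprD hornerM.
    transitivity ((lam j * alpha (s j) ^+ eidx (pr e).1) * (lam j * alpha (s j) ^+ eidx (pr e).2)).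
      ring.
    rewrite !eqf; ring.
  pose M := \matrix_(e < k.*2, l < (k.*2).-1) (hs e)`_l.
  have [c cn0 cM] : exists2 c : 'rV_(k.*2), c != 0 & c *m M = 0 by apply: dep; lia.
  pose S := \sum_(e < k.*2) c 0 e *: hs e.
  have S0 : S = 0.
    apply/polyP => l; rewrite coef0 coef_sum; case: (ltnP l (k.*2).-1) => hl.
      have := congr1 (fun A : 'rV_(k.*2).-1 => A 0 (Ordinal hl)) cM.
      rewrite [in RHS]mxE => h; rewrite -[RHS]h mxE; apply: eq_bigr => e _.
      by rewrite coefZ /M mxE.
    by rewrite big1 // => e _; rewrite coefZ nth_default ?mulr0 // (leq_trans (szh e) hl).
  have call j' : \sum_(e < k.*2) c 0 e * alpha j' ^+ (e : nat) = 0.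
    pose j := (s^-1)%g j'.
    have sj : s j = j' by rewrite /j permKV.
    have : lam j ^+ 2 * \sum_(e < k.*2) c 0 e * alpha j' ^+ (e : nat) = w j ^+ 2 * S.[a j].
      rewrite mulr_sumr /S horner_sum mulr_sumr; apply: eq_bigr => e _.
      by rewrite hornerZ -sj mulrCA eqh mulrCA.
    rewrite S0 horner0 mulr0 => /eqP; rewrite mulf_eq0 expf_eq0 /= (negPf (lamn0 j)) /=.
    by move/eqP.
  by case/negP: cn0; apply/eqP; apply: (@PZ _ _ _ c alpha ai _ call); lia.
pose v (i : 'I_k.+1) : 'rV_n := \row_l (w ((s^-1)%g l) * a ((s^-1)%g l) ^+ i / lam ((s^-1)%g l)).
have vin i : in_code G (v i).
  apply/(EQ _).2; exists 'X^i; first by rewrite size_polyXn; apply: leq_ltn_trans hk'; rewrite -ltnS.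
  apply/matrixP => i0 j; rewrite !mxE permK hornerXn mulrC divfK //.
pose V := \matrix_(i < k.+1, l < n) v i 0 l.
have VG : (V <= G)%MS.
  apply/row_subP => i; have -> : row i V = v i by apply/rowP => l; rewrite !mxE.
  exact: vin.
have [c cn0 cY] : exists2 c : 'rV_k.+1, c != 0 & c *m (V *m pinvmx G) = 0 by apply: dep.
have cV : c *m V = 0 by rewrite -(mulmxKpV VG) mulmxA cY mul0mx.
have call j : \sum_(i < k.+1) c 0 i * a j ^+ (i : nat) = 0.
  have := congr1 (fun A : 'rV_n => A 0 (s j)) cV; rewrite [in RHS]mxE mxE.
  have -> : \sum_(i < k.+1) c 0 i * V i (s j) = (w j / lam j) * \sum_(i < k.+1) c 0 i * a j ^+ i.
    rewrite mulr_sumr; apply: eq_bigr => i _; rewrite /V /v !mxE permK; ring.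
  move/eqP; rewrite mulf_eq0 mulf_eq0 invr_eq0 (negPf (wn0 j)) (negPf (lamn0 j)) /=.
  by move/eqP.
by case/negP: cn0; apply/eqP; apply: (@PZ _ _ _ c a ainj _ call); lia.
Qed.

Theorem theorem4p7 (F : finFieldType) (p m : nat) (gamma : F)
  (n k : nat) (alpha : 'I_n -> F) (a : 'I_n -> nat -> nat) :
  prime p -> p \in [pchar F] -> #|F| = (p ^ m)%N ->
  generates_over_prime gamma ->
  let t := (m.-1)./2 in
  (4 <= k)%N -> (2 * k + 1 <= n)%N -> (n <= p ^ t)%N ->
  let h := k.+1 in
  injective alpha ->
  (forall i, alpha i = gamma ^+ t + \sum_(j < t) (a i j)%:R * gamma ^+ j) ->
  ~~ (p %| (k * k.+1) %/ 2)%N ->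
  non_GRS_MDS (Chk_gen k h alpha).
Proof.
move=> pp chF cF gen t k4 nk npt h ai aeq ndv.
have [phi phiE] := @Fp_morph F p pp chF.
have phinat (c : nat) : phi c%:R = c%:R by rewrite rmorph_nat.
have gen' (x : F) : exists q : {poly 'F_p}, x = (map_poly phi q).[gamma].
  have [s ->] := gen x.
  exists (\sum_(j < size s) (nth 0%N s j)%:R *: 'X^j).
  rewrite rmorph_sum horner_sum; apply: eq_bigr => j _.
  by rewrite -mul_polyC rmorphM /= map_polyC map_polyXn hornerM hornerC hornerXn; congr (_ * _); apply/esym/rmorph_nat.
pose R (i : 'I_n) : {poly 'F_p} := \sum_(j < t) (a i j)%:R *: 'X^j.
pose Ap (i : 'I_n) : {poly 'F_p} := 'X^t + R i.
have szR i : (size (R i) < size ('X^t : {poly 'F_p}))%N.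
  rewrite size_polyXn ltnS; apply/leq_sizeP => l tl.
  rewrite coef_sum big1 // => j _; rewrite coefZ coefXn.
  by case: eqP => [e|]; rewrite ?mulr0 //; move: (ltn_ord j); rewrite -e ltnNge tl.
have Am i : Ap i \is monic by rewrite monicE /Ap lead_coefDl // lead_coefXn.
have As i : size (Ap i) = t.+1 by rewrite /Ap size_polyDl // size_polyXn.
have Aev i : alpha i = (map_poly phi (Ap i)).[gamma].
  rewrite aeq /Ap rmorphD /= rmorphXn /= map_polyX hornerD hornerXn /R rmorph_sum horner_sum.
  congr (_ + _); apply: eq_bigr => j _.
  rewrite -mul_polyC rmorphM /= map_polyC rmorphXn /= map_polyX hornerM hornerC hornerXn.
  by congr (_ * _); apply/esym/rmorph_nat.
have m1 : (0 < m)%N.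
  rewrite lt0n; apply/negP => /eqP m0; move: npt; rewrite /t m0 /= expn0; lia.
have tm : (t.*2 < m)%N.
  have := odd_double_half m.-1; rewrite /t; lia.
have HH (l : seq 'I_n) : uniq l -> size l = k ->
    \sum_(b <- map alpha l) b ^+ 2 + E2 (map alpha l) != 0.
  move=> ul sl.
  have := @h2_nz F p m gamma t phi (map Ap l) pp cF gen' tm.
  have -> : all (fun x => (x \is monic) && (size x == t.+1)) (map Ap l).
    by apply/allP => x /mapP [i _ ->]; rewrite Am As eqxx.
  rewrite size_map sl bin2 /= mulnC -divn2 => /(_ isT ndv).
  by rewrite -map_comp (eq_map (g := alpha)) // => i /=; rewrite Aev.
have [rk MDS] : \rank (Chk_gen k k.+1 alpha) = k /\ is_MDS (Chk_gen k k.+1 alpha).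
  by apply: MDS_part => //; lia.
split => //.
apply: nonGRS => //; lia.
Qed.
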